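(* For a ReLU MLP with parameter vector $w\in\mathbb{R}^p$, define $B=\{w_0\in\mathbb{R}^p : \text{there exist a hidden neuron }(l,i),\ 1\le l\le L,\ 1\le i\le n_l,\ \text{and a nonempty open set } \mathcal{U}\subseteq\mathbb{R}^{n_0} \text{ with } z_l(x;w_0)_i=0 \text{ for all } x\in\mathcal{U}\}$. Then $B$ has Lebesgue measure zero in $\mathbb{R}^p$.
   Context: A ReLU multilayer perceptron (MLP) with $L$ hidden layers and widths $n_0,n_1,\dots,n_L,n_{L+1}$ has parameters $w=(W_0,b_0,W_1,b_1,\dots,W_L,b_L)\in\mathbb{R}^p$ with $W_l\in\mathbb{R}^{n_{l+1}\times n_l}$, $b_l\in\mathbb{R}^{n_{l+1}}$ (all entries concatenated into one vector of length $p$). For $x\in\mathbb{R}^{n_0}$ set $h_0(x;w)=x$ and for $l=1,\dots,L$ define the pre-activations $z_l(x;w)=W_{l-1}h_{l-1}(x;w)+b_{l-1}\in\mathbb{R}^{n_l}$ and activations $h_l(x;w)=\sigma(z_l(x;w))$, where $\sigma(t)=\max(t,0)$ is applied elementwise; the output is $f(x;w)=W_Lh_L(x;w)+b_L$. *)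

(* Defs.v *)
From HB Require Import structures.
From mathcomp Require Import all_boot all_order all_algebra.
From mathcomp Require Import all_classical all_reals all_analysis.
Set Implicit Arguments. Unset Strict Implicit. Unset Printing Implicit Defensive.
Import Order.TTheory GRing.Theory Num.Theory.
Import numFieldNormedType.Exports.
Local Open Scope classical_set_scope.
Local Open Scope ring_scope.

(* A ReLU MLP with L hidden layers and widths n 0, n 1, ..., n L.+1
   (only these values of n : nat -> nat matter).
   Parameter coordinates: for each layer l < L.+1, the entries (i,j) of
   W_l : n (l+1) x n l  (tag inl) and the entries i of b_l : n (l+1) (tag inr).
   The parameter space R^p is R^(mlp_index L n), a finite type of cardinality p. *)
Definition mlp_index (L : nat) (n : nat -> nat) : finType :=
  {l : 'I_L.+1 & ('I_(n l.+1) * 'I_(n l) + 'I_(n l.+1))%type}.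

Definition mlp_param (R : realType) (L : nat) (n : nat -> nat) :=
  mlp_index L n -> R.

Section MLP.
Variables (R : realType) (L : nat) (n : nat -> nat).

(* entry (i,j) of W_l, read as 0 outside the index range *)
Definition Wt (w : mlp_param R L n) (l i j : nat) : R :=
  match (insub l : option 'I_L.+1) with
  | Some l' =>
      match (insub i : option 'I_(n (val l').+1)),
            (insub j : option 'I_(n (val l'))) with
      | Some i', Some j' => w (existT _ l' (inl (i', j')))
      | _, _ => 0
      end
  | None => 0
  end.

(* entry i of b_l, read as 0 outside the index range *)
Definition bias (w : mlp_param R L n) (l i : nat) : R :=
  match (insub l : option 'I_L.+1) with
  | Some l' =>
      match (insub i : option 'I_(n (val l').+1)) with
      | Some i' => w (existT _ l' (inr i'))
      | None => 0
      end
  | None => 0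
  end.

(* input coordinate j of x, 0 outside range *)
Definition inp (x : 'rV[R]_(n 0)) (j : nat) : R :=
  match (insub j : option 'I_(n 0)) with
  | Some j' => x ord0 j'
  | None => 0
  end.

(* activations h_l(x;w) (coordinates indexed by nat, i < n l meaningful) *)
Fixpoint act (w : mlp_param R L n) (x : 'rV[R]_(n 0)) (l : nat) : nat -> R :=
  match l with
  | 0 => inp x
  | k.+1 => fun i =>
      Num.max (\sum_(j < n k) Wt w k i j * act w x k j + bias w k i) 0
  end.

(* pre-activation z_l(x;w)_i = (W_{l-1} h_{l-1} + b_{l-1})_i, for 1 <= l *)
Definition preact (w : mlp_param R L n) (x : 'rV[R]_(n 0)) (l i : nat) : R :=
  \sum_(j < n l.-1) Wt w l.-1 i j * act w x l.-1 j + bias w l.-1 i.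

End MLP.

Definition lebesgue_null (R : realType) (I : finType) (B : set (I -> R)) : Prop :=
  forall eps : R, 0 < eps ->
    exists a b : nat -> I -> R,
      (forall k i, a k i <= b k i) /\
      (B `<=` \bigcup_k [set w | forall i, a k i <= w i <= b k i]) /\
      (forall N, \sum_(k < N) \prod_(i : I) (b k i - a k i) <= eps).

(* Main.v *)
Require Import Defs.
From HB Require Import structures.
From mathcomp Require Import all_boot all_order all_algebra.
From mathcomp Require Import all_classical all_reals all_analysis.
From mathcomp Require Import ring lra.
Import Order.TTheory GRing.Theory Num.Theory.
Import numFieldNormedType.Exports.
Local Open Scope classical_set_scope.
Local Open Scope ring_scope.
Lemma sum_oapp (R : realType) (A T : Type) (h : A -> option T) (F : T -> R) (s : seq A) :
  \sum_(k <- s) oapp F 0 (h k) = \sum_(t <- pmap h s) F t.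
Proof.
elim: s => [|x s IH]; first by rewrite !big_nil.
rewrite big_cons /=; case: (h x) => [t|] /=; by rewrite ?big_cons IH ?add0r.
Qed.

Lemma sum_sub (R : realType) (T : eqType) (F : T -> R) (s r : seq T) :
  (forall t, 0 <= F t) -> uniq s -> uniq r -> {subset s <= r} ->
  \sum_(t <- s) F t <= \sum_(t <- r) F t.
Proof.
move=> F0 us ur sr.
rewrite [X in _ <= X](bigID (mem s)) /=.
have -> : \sum_(t <- r | t \in s) F t = \sum_(t <- s) F t.
  rewrite -big_filter; apply: perm_big; apply: uniq_perm.
  - exact: filter_uniq.
  - exact: us.
  - move=> t; rewrite mem_filter; apply/andP/idP => [[]//|ts]; split=> //; exact: sr.
by rewrite lerDl sumr_ge0.
Qed.

Definition vol {R : realType} {I : finType} (a b : I -> R) := \prod_(i : I) (b i - a i).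

Lemma to_null (R : realType) (I : finType) (i0 : I) (T : countType)
  (a b : T -> I -> R) (eps : R) (S : set (I -> R)) :
  (forall t i, a t i <= b t i) ->
  S `<=` \bigcup_t [set w | forall i, a t i <= w i <= b t i] ->
  (forall s : seq T, uniq s -> \sum_(t <- s) vol (a t) (b t) <= eps) ->
  exists a' b' : nat -> I -> R,
      (forall k i, a' k i <= b' k i) /\
      (S `<=` \bigcup_k [set w | forall i, a' k i <= w i <= b' k i]) /\
      (forall N, \sum_(k < N) \prod_(i : I) (b' k i - a' k i) <= eps).
Proof.
move=> ab Sc Hs.
exists (fun k => oapp a (fun _ => 0) (pickle_inv k)),
       (fun k => oapp b (fun _ => 0) (pickle_inv k)).
split; [|split].
- by move=> k i; case: (pickle_inv k) => [t|] //=.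
- move=> w /Sc [t _ Ht]; exists (pickle t) => //=.
  by rewrite pickleK_inv.
- move=> N.
  have E : forall k, \prod_(i : I) (oapp b (fun _ => 0) (pickle_inv k) i -
                     oapp a (fun _ => 0) (pickle_inv k) i) =
           oapp (fun t => vol (a t) (b t)) 0 (pickle_inv k).
    move=> k; case: (pickle_inv k) => [t|] //=.
    by rewrite (bigD1 i0) //= subrr mul0r.
  under eq_bigr do rewrite E.
  rewrite -(big_mkord xpredT (fun k => oapp (fun t => vol (a t) (b t)) 0 (pickle_inv k))).
  rewrite sum_oapp; apply: Hs.
  apply: (pmap_uniq (@pickle_invK T)); exact: iota_uniq.
Qed.

Lemma null_sub (R : realType) (I : finType) (S S' : set (I -> R)) :
  S `<=` S' -> lebesgue_null S' -> lebesgue_null S.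
Proof.
move=> sS nS eps e0; have [a [b [ab [cov H]]]] := nS eps e0.
by exists a, b; split=> //; split=> //; apply: subset_trans cov.
Qed.

Lemma geo (R : realType) (P : nat) :
  \sum_(m < P) ((2:R)^-1)^+m.+1 = 1 - ((2:R)^-1)^+P.
Proof.
elim: P => [|P IH]; first by rewrite big_ord0 expr0 subrr.
rewrite big_ord_recr /= IH exprS; set X := _ ^+ P.
have h2 : (2:R) != 0 by rewrite pnatr_eq0.
by field.
Qed.

Lemma vol_ge0 (R : realType) (I : finType) (a b : I -> R) :
  (forall i, a i <= b i) -> 0 <= vol a b.
Proof. by move=> ab; apply: prodr_ge0 => i _; rewrite subr_ge0. Qed.

Lemma null_union (R : realType) (I : finType) (i0 : I) (S : nat -> set (I -> R)) :
  (forall m, lebesgue_null (S m)) -> lebesgue_null (\bigcup_m S m).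
Proof.
move=> H eps e0.
have H' : forall m, exists ab : (nat -> I -> R) * (nat -> I -> R),
    (forall k i, ab.1 k i <= ab.2 k i) /\
    (S m `<=` \bigcup_k [set w | forall i, ab.1 k i <= w i <= ab.2 k i]) /\
    (forall N, \sum_(k < N) vol (ab.1 k) (ab.2 k) <= eps * ((2:R)^-1)^+m.+1).
  move=> m.
  have em : 0 < eps * ((2:R)^-1)^+m.+1 by rewrite mulr_gt0 // exprn_gt0 // invr_gt0.
  have [a [b [h1 [h2 h3]]]] := H m _ em.
  by exists (a, b).
have [f Hf] := choice H'.
apply: (@to_null R I i0 (nat * nat)%type
   (fun t => (f t.1).1 t.2) (fun t => (f t.1).2 t.2)).
- by move=> t i; case: (Hf t.1) => h _; apply: h.
- move=> w [m _ Sw]; case: (Hf m) => _ [cov _].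
  have [k _ Hk] := cov w Sw.
  by exists (m, k).
- move=> s us.
  set P := (\max_(t <- s) maxn t.1 t.2).+1.
  apply: le_trans (@sum_sub R _ _ s [seq (x, y) | x <- iota 0 P, y <- iota 0 P] _ us _ _) _.
  + by move=> t; apply: vol_ge0 => i; case: (Hf t.1) => h _; apply: h.
  + by apply: allpairs_uniq => //; [exact: iota_uniq | exact: iota_uniq | move=> [? ?] [? ?]].
  + move=> [x y] xs.
    have hm : (maxn x y <= \max_(t <- s) maxn t.1 t.2)%N.
      exact: (@leq_bigmax_seq _ s xpredT (fun t => maxn t.1 t.2) (x, y) xs).
    apply: allpairs_f; rewrite mem_iota /= add0n /P ltnS.
    * by apply: leq_trans hm; rewrite leq_maxl.
    * by apply: leq_trans hm; rewrite leq_maxr.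
  + rewrite big_allpairs.
    have -> : iota 0 P = index_iota 0 P by rewrite /index_iota subn0.
    rewrite big_mkord.
    apply: le_trans (_ : \sum_(m < P) eps * ((2:R)^-1)^+m.+1 <= eps).
      apply: ler_sum => m _; rewrite big_mkord.
      by case: (Hf m) => _ [_ h]; apply: h.
    by rewrite -mulr_sumr geo ler_piMr ?(ltW e0) //.
Qed.

Lemma null_cunion (R : realType) (I : finType) (i0 : I) (T : countType)
  (S : T -> set (I -> R)) :
  (forall t, lebesgue_null (S t)) -> lebesgue_null (\bigcup_t S t).
Proof.
move=> H.
apply: (@null_sub R I _ (\bigcup_m (fun w => exists t, pickle_inv m = Some t /\ S t w))).
  move=> w [t _ Sw]; exists (pickle t) => //; exists t; split=> //.
  by rewrite pickleK_inv.
apply: (@null_union R I i0) => m.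
case E: (pickle_inv m) => [t|].
  apply: (@null_sub R I _ (S t)); last exact: H.
  by move=> w [t' [[<-] ?]].
move=> eps e0; exists (fun _ _ => 0), (fun _ _ => 0); split=> //; split.
  by move=> w [t' []].
move=> N; rewrite big1 ?(ltW e0) // => k _.
by rewrite (bigD1 i0) //= subrr mul0r.
Qed.

Lemma slab_null (R : realType) (I : finType) (k0 : I) (G : (I -> R) -> R) (B K : R) :
  0 < B -> 0 <= K ->
  (forall w v d, 0 <= d -> (forall t, t != k0 -> `|w t| <= B) ->
     (forall t, t != k0 -> `|v t| <= B) ->
     (forall t, t != k0 -> `|w t - v t| <= d) -> `|G w - G v| <= K * d) ->
  lebesgue_null [set w | w k0 = G w /\ forall t, t != k0 -> `|w t| <= B].
Proof.
move=> B0 K0 HG eps e0.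
pose C := \prod_(t | t != k0) (4 * B).
have C0 : 0 <= C by apply: prodr_ge0 => t _; rewrite mulr_ge0 // ltW.
pose N := (Num.truncn (4 * K * B * C / eps)).+1.
have hN : 4 * K * B * C / eps < N%:R by apply: truncnS_gt.
have N0 : 0 < N%:R :> R by rewrite ltr0n.
pose d := 2 * B / N%:R.
have d0 : 0 < d by rewrite divr_gt0 // mulr_gt0.
have Nd : N%:R * d = 2 * B by rewrite /d mulrC divfK // gt_eqF.
pose c := fun (f : {ffun I -> 'I_N.+1}) t => - B + d * (f t)%:R.
pose len := fun t (j : 'I_N.+1) =>
  if t == k0 then (if val j == 0%N then 2 * K * d else 0) else d.
have len0 : forall t j, 0 <= len t j.
  move=> t j; rewrite /len; case: ifP => _; last exact: ltW.
  by case: ifP => _ //; rewrite !mulr_ge0 // ltW.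
pose a := fun f t => if t == k0 then G (c f) - K * d else c f t.
pose b := fun f t => a f t + len t (f t).
apply: (@to_null R I k0 {ffun I -> 'I_N.+1} a b).
- by move=> f t; rewrite /b lerDl.
- move=> w [Ew Bw].
  pose f : {ffun I -> 'I_N.+1} :=
    [ffun t => if t == k0 then ord0 else inord (Num.truncn ((w t + B) / d))].
  have cell : forall t, t != k0 -> c f t <= w t <= c f t + d.
    move=> t ht; rewrite /c ffunE (negbTE ht).
    have := Bw t ht; rewrite ler_norml => /andP[wl wu].
    pose y := (w t + B) / d.
    have yd : y * d = w t + B by rewrite /y divfK // gt_eqF.
    have y0 : 0 <= y by rewrite divr_ge0 ?(ltW d0) // -lerBlDr sub0r.
    have yN : y < N.+1%:R.
      have : y * d <= N%:R * d by rewrite yd Nd; lra.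
      rewrite ler_pM2r // => h; apply: le_lt_trans h _; rewrite ltr_nat.
      exact: ltnSn.
    rewrite inordK; last by rewrite ltnS truncn_le_nat.
    have /andP[k1 k2] := truncn_itv y0.
    have h1 : (Num.truncn y)%:R * d <= y * d by rewrite ler_pM2r.
    have h2 : y * d <= (Num.truncn y).+1%:R * d by rewrite ler_pM2r // ltW.
    move: h1 h2; rewrite yd -natr1 => h1 h2.
    apply/andP; split; lra.
  have Bc : forall t, t != k0 -> `|c f t| <= B.
    move=> t ht; have /andP[h1 h2] := cell t ht.
    have := Bw t ht; rewrite !ler_norml => /andP[wl wu].
    have : 0 <= d * (f t)%:R by rewrite mulr_ge0 // ltW.
    rewrite /c in h1 h2 * => h3; apply/andP; split; lra.
  have cl : forall t, t != k0 -> `|w t - c f t| <= d.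
    move=> t ht; have /andP[h1 h2] := cell t ht.
    rewrite ler_norml; apply/andP; split; lra.
  exists f => // t; rewrite /b /a.
  case: (eqVneq t k0) => [->|ht].
    rewrite /len /f !ffunE !eqxx /= Ew.
    have := HG w (c f) d (ltW d0) Bw Bc cl; rewrite ler_norml => /andP[h1 h2].
    apply/andP; split; lra.
  by rewrite /len (negbTE ht); apply: cell.
- move=> s us.
  apply: le_trans (@sum_sub R _ (fun f => vol (a f) (b f)) s (index_enum _) _ us (index_enum_uniq _) (fun f _ => mem_index_enum f)) _.
    by move=> f; apply: vol_ge0 => t; rewrite /b lerDl.
  have E : forall f, vol (a f) (b f) = \prod_t len t (f t).
    by move=> f; apply: eq_bigr => t _; rewrite /b; ring.
  under eq_bigr do rewrite E.
  rewrite -bigA_distr_bigA /= (bigD1 k0) //=.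
  have -> : \sum_(j < N.+1) len k0 j = 2 * K * d.
    rewrite big_ord_recl /len eqxx /= big1 ?addr0 // => j _.
  have P : \prod_(t | t != k0) \sum_(j < N.+1) len t j <= C.
    apply: ler_prod => t ht; rewrite sumr_ge0 //=.
    rewrite (eq_bigr (fun _ => d)); last by move=> j _; rewrite /len (negbTE ht).
    rewrite sumr_const card_ord -mulr_natr -natr1.
    have : d <= 2 * B.
      rewrite -Nd ler_peMl ?(ltW d0) // ler1n; exact: ltn0Sn.
    lra.
  apply: le_trans (_ : 2 * K * d * C <= eps).
    by rewrite ler_wpM2l // !mulr_ge0 // ltW.
  have e2 : 4 * K * B * C < N%:R * eps.
    by move: hN; rewrite ltr_pdivrMr.
  have e1 : 2 * K * d * C * N%:R = 4 * K * B * C.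
    have -> : 2 * K * d * C * N%:R = 2 * K * C * (N%:R * d) by ring.
    by rewrite Nd; ring.
  have : 2 * K * d * C * N%:R <= eps * N%:R by rewrite e1 [eps * _]mulrC ltW.
  by rewrite ler_pM2r.
Qed.

Lemma graph_null (R : realType) (I : finType) (k0 : I) (G : (I -> R) -> R)
  (S : set (I -> R)) :
  (forall B, 0 < B -> exists K, 0 <= K /\
    forall w v d, 0 <= d -> (forall t, t != k0 -> `|w t| <= B) ->
     (forall t, t != k0 -> `|v t| <= B) ->
     (forall t, t != k0 -> `|w t - v t| <= d) -> `|G w - G v| <= K * d) ->
  S `<=` [set w | w k0 = G w] -> lebesgue_null S.
Proof.
move=> HG SG.
apply: (@null_sub R I _ (\bigcup_(M : nat)
  [set w | w k0 = G w /\ forall t, t != k0 -> `|w t| <= M%:R + 1])).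
  move=> w Sw; exists (Num.truncn (\sum_t `|w t|)) => //; split; first exact: SG.
  move=> t _.
  have h1 : `|w t| <= \sum_t `|w t| by rewrite (bigD1 t) //= lerDl sumr_ge0.
  have h2 := truncnS_gt (\sum_t `|w t|); rewrite -natr1 in h2.
  exact: le_trans h1 (ltW h2).
apply: (@null_union R I k0) => M.
have [K [K0 HK]] := HG (M%:R + 1) (ltr_wpDl (ler0n _ _) ltr01).
exact: slab_null K0 HK.
Qed.

Lemma relu_abs {R : realType} (a : R) : `|Num.max a 0| <= `|a|.
Proof.
by case: (lerP a 0) => h; rewrite ?normr0.
Qed.

Lemma relu_lip {R : realType} (a b : R) : `|Num.max a 0 - Num.max b 0| <= `|a - b|.
Proof.
have h1 := ler_norm (a - b); have h2 := ler_norm (b - a); rewrite distrC in h2.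
case: (lerP a 0) => ha; case: (lerP b 0) => hb.
- by rewrite subrr normr0.
- rewrite sub0r normrN gtr0_norm //; lra.
- rewrite subr0 gtr0_norm //; lra.
- by [].
Qed.

Definition isinl {L : nat} {n : nat -> nat} (t : mlp_index L n) : bool :=
  if projT2 t is inl _ then true else false.

Lemma Wt_cases {R : realType} {L : nat} {n : nat -> nat} (w v : mlp_param R L n) m i j :
  (Wt w m i j = 0 /\ Wt v m i j = 0) \/
  exists t, [/\ Wt w m i j = w t, Wt v m i j = v t & isinl t].
Proof.
rewrite /Wt; case: insubP => [m' _ _|_]; last by left.
case: insubP => [i' _ _|_]; last by left.
case: insubP => [j' _ _|_]; last by left.
by right; eexists.
Qed.

Lemma bias_cases {R : realType} {L : nat} {n : nat -> nat} (w v : mlp_param R L n) m i :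
  (bias w m i = 0 /\ bias v m i = 0) \/
  exists t : mlp_index L n, [/\ bias w m i = w t, bias v m i = v t & val (projT1 t) = m].
Proof.
rewrite /bias; case: insubP => [m' _ vm|_]; last by left.
case: insubP => [i' _ _|_]; last by left.
by right; exists (existT _ m' (inr i')).
Qed.

Lemma act_lip (R : realType) (L : nat) (n : nat -> nat) (x : 'rV[R]_(n 0%N))
  (lv : nat) (B : R) : 0 <= B -> forall k, (k <= lv)%N ->
  exists A K : R, 0 <= A /\ 0 <= K /\
  forall (w v : mlp_param R L n) d, 0 <= d ->
    (forall m i j, `|Wt w m i j| <= B) -> (forall m i j, `|Wt v m i j| <= B) ->
    (forall m i, (m < lv)%N -> `|bias w m i| <= B) ->
    (forall m i, (m < lv)%N -> `|bias v m i| <= B) ->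
    (forall m i j, `|Wt w m i j - Wt v m i j| <= d) ->
    (forall m i, (m < lv)%N -> `|bias w m i - bias v m i| <= d) ->
    forall j, `|act w x k j| <= A /\ `|act w x k j - act v x k j| <= K * d.
Proof.
move=> B0; elim=> [|k IH] hk.
  exists (\sum_(j < n 0%N) `|x ord0 j|), 0; split; first exact: sumr_ge0.
  split=> // w v d d0 _ _ _ _ _ _ j; rewrite /= subrr normr0 mul0r; split=> //.
  rewrite /inp; case: insubP => [j' _ _|_]; last by rewrite normr0 sumr_ge0.
  by rewrite (bigD1 j') //= lerDl sumr_ge0.
have [A [K [A0 [K0 H]]]] := IH (ltnW hk).
exists (\sum_(j < n k) (B * A) + B), (\sum_(j < n k) (A + B * K) + 1).
split; first by rewrite addr_ge0 // sumr_ge0 // => j _; rewrite mulr_ge0.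
split; first by rewrite addr_ge0 // sumr_ge0 // => j _; rewrite addr_ge0 // mulr_ge0.
move=> w v d d0 Ww Wv bw bv Wd bd j /=.
have hkl : (k < lv)%N by [].
split.
  apply: le_trans (relu_abs _) _.
  apply: le_trans (ler_normD _ _) _; apply: lerD; last exact: bw.
  apply: le_trans (ler_norm_sum _ _ _) _; apply: ler_sum => j' _.
  rewrite normrM; apply: ler_pM; rewrite ?normr_ge0 //.
  by case: (H w v d d0 Ww Wv bw bv Wd bd j').
apply: le_trans (relu_lip _ _) _.
set sw := \sum_(j' < n k) _; set sv := \sum_(j' < n k) _.
have -> : sw + bias w k j - (sv + bias v k j) =
   \sum_(j' < n k) (Wt w k j j' * act w x k j' - Wt v k j j' * act v x k j') +
   (bias w k j - bias v k j).
  by rewrite sumrB /sw /sv; ring.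
apply: le_trans (ler_normD _ _) _.
rewrite mulrDl mul1r; apply: lerD; last exact: bd.
apply: le_trans (ler_norm_sum _ _ _) _.
rewrite mulr_suml; apply: ler_sum => j' _.
have [Ha Hd] := H w v d d0 Ww Wv bw bv Wd bd j'.
have -> : Wt w k j j' * act w x k j' - Wt v k j j' * act v x k j' =
  (Wt w k j j' - Wt v k j j') * act w x k j' + Wt v k j j' * (act w x k j' - act v x k j')
  by ring.
apply: le_trans (ler_normD _ _) _; rewrite !normrM.
have e : (A + B * K) * d = d * A + B * (K * d) by ring.
by rewrite e; apply: lerD; apply: ler_pM; rewrite ?normr_ge0 ?Wd ?Wv ?Ha ?Hd.
Qed.

Lemma preact_null (R : realType) (L : nat) (n : nat -> nat) (x : 'rV[R]_(n 0%N))
  (l i : nat) : (1 <= l <= L)%N -> (i < n l)%N ->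
  lebesgue_null [set w : mlp_param R L n | preact w x l i = 0].
Proof.
case: l => [//|lv] /andP[_ hlv'] hi.
have hlv : (lv < L.+1)%N by apply: ltnW.
pose k0 : mlp_index L n := existT _ (Ordinal hlv) (inr (Ordinal hi)).
pose G := fun w : mlp_param R L n => - \sum_(j < n lv) Wt w lv i j * act w x lv j.
apply: (@graph_null R (mlp_index L n) k0 G).
- move=> B B0.
  have [A [K [A0 [K0 H]]]] := @act_lip R L n x lv B (ltW B0) lv (leqnn lv).
  exists (\sum_(j < n lv) (A + B * K)); split.
    by apply: sumr_ge0 => j _; rewrite addr_ge0 // mulr_ge0 // ltW.
  move=> w v d d0 Bw Bv Cw.
  have tW : forall (u : mlp_param R L n) m i j, (forall t, t != k0 -> `|u t| <= B) ->
      `|Wt u m i j| <= B.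
    move=> u m i' j Bu.
    case: (Wt_cases u u m i' j) => [[-> _]|[t [-> _ ht]]]; first by rewrite normr0 ltW.
    apply: Bu; apply/eqP => tk; by rewrite tk in ht.
  have tb : forall (u : mlp_param R L n) m i, (m < lv)%N -> (forall t, t != k0 -> `|u t| <= B) ->
      `|bias u m i| <= B.
    move=> u m i' hm Bu.
    case: (bias_cases u u m i') => [[-> _]|[t [-> _ ht]]]; first by rewrite normr0 ltW.
    apply: Bu; apply/eqP => tk; move: ht; rewrite tk /= => hm'.
    by rewrite hm' ltnn in hm.
  have Wd : forall m i j, `|Wt w m i j - Wt v m i j| <= d.
    move=> m i' j.
    case: (Wt_cases w v m i' j) => [[-> ->]|[t [-> -> ht]]]; first by rewrite subrr normr0.
    apply: Cw; apply/eqP => tk; by rewrite tk in ht.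
  have bd : forall m i, (m < lv)%N -> `|bias w m i - bias v m i| <= d.
    move=> m i' hm.
    case: (bias_cases w v m i') => [[-> ->]|[t [-> -> ht]]]; first by rewrite subrr normr0.
    apply: Cw; apply/eqP => tk; move: ht; rewrite tk /= => hm'.
    by rewrite hm' ltnn in hm.
  have HH := H w v d d0 (fun m i j => tW w m i j Bw) (fun m i j => tW v m i j Bv)
    (fun m i hm => tb w m i hm Bw) (fun m i hm => tb v m i hm Bv) Wd bd.
  have -> : G w - G v = - (\sum_(j < n lv) (Wt w lv i j * act w x lv j - Wt v lv i j * act v x lv j)).
    by rewrite sumrB /G; ring.
  rewrite normrN; apply: le_trans (ler_norm_sum _ _ _) _.
  rewrite mulr_suml; apply: ler_sum => j _.
  have [Ha Hd] := HH j.
  have -> : Wt w lv i j * act w x lv j - Wt v lv i j * act v x lv j =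
    (Wt w lv i j - Wt v lv i j) * act w x lv j + Wt v lv i j * (act w x lv j - act v x lv j)
    by ring.
  apply: le_trans (ler_normD _ _) _; rewrite !normrM.
  have e : (A + B * K) * d = d * A + B * (K * d) by ring.
  by rewrite e; apply: lerD; apply: ler_pM; rewrite ?normr_ge0 ?Wd ?tW ?Ha ?Hd.
- move=> w /= P0.
  have Eb : bias w lv i = w k0.
    rewrite /bias; case: insubP => [l' _ vl'|h]; last by rewrite hlv in h.
    have El : l' = Ordinal hlv by apply: val_inj.
    subst l'.
    case: insubP => [i' _ vi'|h]; last by rewrite /= hi in h.
    by have -> : i' = Ordinal hi by apply: val_inj.
  move: P0; rewrite /preact /= Eb /G => P0.
  by apply/eqP; rewrite -addr_eq0 addrC P0.
Qed.

Lemma rat_pt {R : realType} {m : nat} {U : set 'rV[R]_m} :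
  open U -> (exists x, U x) -> exists q : 'rV[rat]_m, U (map_mx ratr q).
Proof.
move=> oU [x Ux].
have /nbhs_ballP[e e0 sU] : nbhs x U by move: oU; rewrite openE; apply.
have H : forall j : 'I_m, exists r : rat, ball (x ord0 j) e (ratr r).
  move=> j.
  have [y [By [r _ ry]]] := dense_rat (ex_intro _ (x ord0 j) (ballxx _ e0)) (ball_open (x ord0 j) e).
  by exists r; rewrite ry.
have [f Hf] := choice H.
exists (\row_j f j); apply: sU.
split=> // i j; rewrite (ord1 i) !mxE; exact: Hf.
Qed.

Lemma null0 (R : realType) (I : finType) (i0 : I) : lebesgue_null (@set0 (I -> R)).
Proof.
move=> eps e0; exists (fun _ _ => 0), (fun _ _ => 0); split=> //; split=> //.
move=> N; rewrite big1 ?(ltW e0) // => k _.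
by rewrite (bigD1 i0) //= subrr mul0r.
Qed.

Theorem mainTheorem2 (R : realType) (L : nat) (n : nat -> nat)
  (hn : forall l, (l <= L.+1)%N -> (0 < n l)%N) :
  lebesgue_null
    [set w : mlp_param R L n |
      exists l i : nat, [/\ (1 <= l <= L)%N, (i < n l)%N &
        exists U : set 'rV[R]_(n 0%N),
          [/\ open U, (exists x, U x) &
              forall x, U x -> preact w x l i = 0]]].
Proof.
have i0 : mlp_index L n := existT _ ord0 (inr (Ordinal (hn 1%N isT))).
apply: (@null_sub R (mlp_index L n) _ (\bigcup_(t : (nat * nat * 'rV[rat]_(n 0%N)))
   [set w | ((1 <= t.1.1 <= L)%N && (t.1.2 < n t.1.1)%N) /\
            preact w (map_mx ratr t.2) t.1.1 t.1.2 = 0])).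
  move=> w [l [i [hl hi [U [oU nU HU]]]]].
  have [q Uq] := rat_pt oU nU.
  by exists (l, i, q) => //=; split; [rewrite hl hi | exact: HU].
apply: (@null_cunion R _ i0) => -[[l i] q] /=.
case: (boolP ((1 <= l <= L)%N && (i < n l)%N)) => [/andP[hl hi]|hf].
  apply: (@null_sub R _ _ _ _ (@preact_null R L n (map_mx ratr q) l i hl hi)).
  by move=> w [].
apply: (@null_sub R _ _ _ _ (@null0 R (mlp_index L n) i0)).
by move=> w [].
Qed.
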